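(* If $G$ is a connected graph, then $\mathrm{gp}(G)\ge \omega(G_{\rm SR})$. Moreover, equality holds if and only if $G$ contains a gp-set that induces a complete subgraph of $G_{\rm SR}$.
   Context: All graphs are finite and simple. For a connected graph $G$, $d_G(u,v)$ is the distance between $u$ and $v$, and a geodesic is a shortest path. A set $S\subseteq V(G)$ is a general position set if no three pairwise distinct vertices of $S$ lie on a common geodesic of $G$; $\mathrm{gp}(G)$ is the maximum cardinality of a general position set, and a gp-set is a general position set of cardinality $\mathrm{gp}(G)$. A vertex $u$ is maximally distant from a vertex $v$ if every neighbor $w$ of $u$ satisfies $d_G(v,w)\le d_G(u,v)$; $u$ and $v$ are mutually maximally distant (MMD) if each is maximally distant from the other. The strong resolving graph $G_{\rm SR}$ has vertex set $V(G)$, two distinct vertices being adjacent in $G_{\rm SR}$ iff they are MMD in $G$. $\omega$ denotes the clique number. *)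

(* Defs.v *)
From mathcomp Require Import all_boot.
From Stdlib Require Import ClassicalEpsilon.
Set Implicit Arguments. Unset Strict Implicit. Unset Printing Implicit Defensive.

Definition pbool (P : Prop) : bool :=
  if excluded_middle_informative P then true else false.

Section Graph.
Variables (T : finType) (e : rel T).

Definition simple_graph := symmetric e /\ irreflexive e.

Definition connected_graph := forall x y : T, connect e x y.

Fixpoint ball (x : T) (k : nat) : {set T} :=
  match k with
  | 0 => [set x]
  | k'.+1 => ball x k' :|: [set z | [exists w in ball x k', e w z]]
  end.

(* d_G(x,y): least k with y in ball x k (k ranges over 0..#|T|-1,
   which suffices in a connected graph). *)
Definition dist (x y : T) : nat := find (fun k => y \in ball x k) (iota 0 #|T|).

Definition geodesic (a b : T) (p : seq T) : Prop :=
  path e a p /\ last a p = b /\ size p = dist a b.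

Definition on_common_geodesic (u v w : T) : Prop :=
  exists a b p, geodesic a b p /\ u \in a :: p /\ v \in a :: p /\ w \in a :: p.

Definition gp_set (S : {set T}) : Prop :=
  forall u v w, u \in S -> v \in S -> w \in S ->
    u != v -> v != w -> u != w -> ~ on_common_geodesic u v w.

Definition gp_number : nat :=
  \max_(S : {set T} | pbool (gp_set S)) #|S|.

Definition gp_setmax (S : {set T}) : Prop := gp_set S /\ #|S| = gp_number.

Definition maximally_distant (u v : T) : Prop :=
  forall w, e u w -> dist v w <= dist u v.

Definition MMD (u v : T) : Prop := maximally_distant u v /\ maximally_distant v u.

Definition SR_adj (u v : T) : Prop := u != v /\ MMD u v.

Definition SR_clique (S : {set T}) : Prop :=
  forall u v, u \in S -> v \in S -> u != v -> SR_adj u v.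

Definition omega_SR : nat :=
  \max_(S : {set T} | pbool (SR_clique S)) #|S|.

End Graph.

(* Main.v *)
Require Import Defs.
From mathcomp Require Import all_boot.
From mathcomp Require Import zify.
From Stdlib Require Import ClassicalEpsilon.
Set Implicit Arguments. Unset Strict Implicit.

Lemma pboolP (P : Prop) : pbool P = true <-> P.
Proof. rewrite /pbool; case: excluded_middle_informative => //; split => //. Qed.

Lemma ball_walk_to (T : finType) (e : rel T) x y k :
  y \in ball e x k -> exists p, path e x p /\ last x p = y /\ size p <= k.
Proof.
elim: k y => [|k IH] y /=.
- rewrite in_set1 => /eqP ->. by exists [::].
- rewrite in_setU => /orP [/IH [p [h1 [h2 h3]]] | ].
  + exists p; split => //; split => //; exact: leqW.
  + rewrite in_set => /existsP [w /andP [/IH [p [h1 [h2 h3]]] ew]].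
    exists (rcons p y). rewrite rcons_path last_rcons size_rcons h1 /= h2 ew.
    by split.
Qed.

Lemma walk_ball (T : finType) (e : rel T) x y k p :
  path e x p -> last x p = y -> size p <= k -> y \in ball e x k.
Proof.
elim: k p y => [|k IH] p y.
- case: p => //= _ <- _. by rewrite in_set1.
- case/lastP: p => [|p z] /=.
  + move=> _ <- _. rewrite in_setU; apply/orP; left. by apply: (IH [::]).
  + rewrite rcons_path last_rcons size_rcons => /andP [hp ez] <- hs.
    rewrite in_setU; apply/orP; right. rewrite in_set; apply/existsP.
    exists (last x p); rewrite ez andbT. by apply: (IH p).
Qed.

Lemma dist_le (T : finType) (e : rel T) x y p :
  path e x p -> last x p = y -> dist e x y <= size p.
Proof.
move=> hp hl. rewrite /dist. case: (ltnP (size p) #|T|) => H.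
- rewrite leqNgt; apply/negP => Hlt.
  have := before_find 0 Hlt. rewrite nth_iota // add0n.
  by rewrite (walk_ball hp hl (leqnn _)).
- apply: leq_trans (find_size _ _) _. by rewrite size_iota.
Qed.

Lemma dist_lt (T : finType) (e : rel T) x y :
  connected_graph e -> dist e x y < #|T|.
Proof.
move=> Hc. have := Hc x y. case/connectP => p hp ->.
case: (shortenP hp) => p' hp' hu _.
have h1 := dist_le hp' erefl.
have : #|x :: p'| <= #|T| := max_card _.
rewrite (card_uniqP hu) /=. lia.
Qed.

Lemma dist_walk (T : finType) (e : rel T) x y :
  connected_graph e -> exists p, path e x p /\ last x p = y /\ size p <= dist e x y.
Proof.
move=> Hc. have Hlt := dist_lt x y Hc.
have hs : has (fun k => y \in ball e x k) (iota 0 #|T|) by rewrite has_find size_iota.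
have := nth_find 0 hs. rewrite -/(dist e x y) nth_iota // add0n.
exact: ball_walk_to.
Qed.

Lemma dist_tri (T : finType) (e : rel T) x y z :
  connected_graph e -> dist e x z <= dist e x y + dist e y z.
Proof.
move=> Hc. have [p1 [h1 [l1 s1]]] := dist_walk x y Hc.
have [p2 [h2 [l2 s2]]] := dist_walk y z Hc.
have := @dist_le _ e x z (p1 ++ p2).
rewrite cat_path h1 l1 h2 last_cat l1 l2 size_cat => /(_ erefl erefl). lia.
Qed.

Lemma walk_rev (T : finType) (e : rel T) x p :
  symmetric e -> path e x p ->
  exists r, path e (last x p) r /\ last (last x p) r = x /\ size r = size p.
Proof.
move=> Hs. elim: p x => [|y p IH] x /=.
- by exists [::].
- case/andP => exy hp. have [r [h1 [h2 h3]]] := IH y hp.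
  exists (rcons r x). rewrite rcons_path last_rcons size_rcons h1 h2 Hs exy h3.
  by split.
Qed.

Lemma dist_sym (T : finType) (e : rel T) x y :
  symmetric e -> connected_graph e -> dist e x y = dist e y x.
Proof.
move=> Hs Hc.
have H : forall a b, dist e a b <= dist e b a.
  move=> a b. have [p [h1 [l1 s1]]] := dist_walk b a Hc.
  have [r [h2 [l2 s2]]] := walk_rev Hs h1.
  rewrite l1 in h2 l2. have := dist_le h2 l2. lia.
apply/eqP; rewrite eqn_leq !H //.
Qed.

Lemma segment (T : finType) (e : rel T) x0 x p s t :
  path e x p -> s <= t -> t <= size p ->
  exists r, path e (nth x0 (x :: p) s) r /\
            last (nth x0 (x :: p) s) r = nth x0 (x :: p) t /\ size r = t - s.
Proof.
elim: p x s t => [|y p IH] x s t.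
- move=> _ hst; rewrite /= => ht. have -> : t = 0 by lia. have -> : s = 0 by lia. by exists [::].
- move=> /= /andP [exy hp].
  case: s => [|s]; case: t => [|t] //= hst ht.
  + by exists [::].
  + have [r [h1 [h2 h3]]] := IH y 0 t hp (leq0n _) ht.
    exists (y :: r). rewrite /= exy h1 h2 h3. split => //; split => //; lia.
  + have [r [h1 [h2 h3]]] := IH y s t hp hst ht.
    exists r. rewrite h1 h2 h3. split => //.
Qed.

Lemma edge_nth (T : finType) (e : rel T) x0 x p j :
  path e x p -> j < size p -> e (nth x0 (x :: p) j) (nth x0 (x :: p) j.+1).
Proof.
elim: p x j => [|y p IH] x j //= /andP [exy hp].
case: j => [|j] //= hj. exact: IH.
Qed.

Lemma geo_incr (T : finType) (e : rel T) a b p s j :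
  connected_graph e -> geodesic e a b p -> s <= j -> j < size p ->
  dist e (nth a (a :: p) s) (nth a (a :: p) j) <
  dist e (nth a (a :: p) s) (nth a (a :: p) j.+1).
Proof.
move=> Hc [hp [hl hs]] hsj hj.
set q := a :: p.
have [r1 [a1 [b1 c1]]] := segment a hp (leq0n s) (leq_trans hsj (ltnW hj)).
have [r2 [a2 [b2 c2]]] := segment a hp hsj (ltnW hj).
have [r3 [a3 [b3 c3]]] := segment a hp hj (leqnn _).
have d1 := dist_le a1 b1. have d2 := dist_le a2 b2. have d3 := dist_le a3 b3.
have hb : nth a q (size p) = b by rewrite -hl (last_nth a).
rewrite /q in hb; rewrite hb in d3. change (nth a (a :: p) 0) with a in d1.
have t1 := dist_tri (nth a q s) (nth a q j.+1) b Hc.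
have t2 := dist_tri a (nth a q s) b Hc.
rewrite /q in t1 t2 d2 *. lia.
Qed.

Lemma key (T : finType) (e : rel T) a b p x y z :
  symmetric e -> connected_graph e -> geodesic e a b p ->
  x \in a :: p -> y \in a :: p -> z \in a :: p ->
  index x (a :: p) < index y (a :: p) -> index y (a :: p) < index z (a :: p) ->
  ~ maximally_distant e y x.
Proof.
move=> Hs Hc Hg hx hy hz hxy hyz Hmd.
have hzs : index z (a :: p) < size (a :: p) by rewrite index_mem.
have hj : index y (a :: p) < size p by move: hzs; rewrite [size _]/=; lia.
have := geo_incr Hc Hg (ltnW hxy) hj.
rewrite !nth_index // => H.
have := edge_nth a (proj1 Hg) hj. rewrite (nth_index _ hy) => E. have := Hmd _ E. rewrite (dist_sym y x Hs Hc).
lia.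
Qed.

Lemma clique_gp (T : finType) (e : rel T) S :
  symmetric e -> connected_graph e -> SR_clique e S -> gp_set e S.
Proof.
move=> Hs Hc Hcl u v w hu hv hw huv hvw huw [a [b [p [Hg [iu [iv iw]]]]]].
have K : forall x y z, x \in S -> y \in S -> z \in S -> y != x ->
    x \in a :: p -> y \in a :: p -> z \in a :: p ->
    index x (a :: p) < index y (a :: p) -> index y (a :: p) < index z (a :: p) -> False.
  move=> x y z hx hy hz hyx qx qy qz h1 h2.
  have [_ [md _]] := Hcl y x hy hx hyx.
  exact: (key Hs Hc Hg qx qy qz h1 h2 md).
have D : forall x y, x \in a :: p -> y \in a :: p -> x != y ->
    index x (a :: p) != index y (a :: p).
  move=> x y qx qy; apply: contra => /eqP E.
  by rewrite -(nth_index a qx) E nth_index.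
have := D _ _ iu iv huv. have := D _ _ iv iw hvw. have := D _ _ iu iw huw.
have hvu : v != u by rewrite eq_sym. have hwv : w != v by rewrite eq_sym. have hwu : w != u by rewrite eq_sym.
case: (ltngtP (index u (a :: p)) (index v (a :: p))) => //;
case: (ltngtP (index v (a :: p)) (index w (a :: p))) => //;
case: (ltngtP (index u (a :: p)) (index w (a :: p))) => // h1 h2 h3 _ _ _.
all: first [ by apply: (K u v w) | by apply: (K w v u) | by apply: (K v u w)
           | by apply: (K w u v) | by apply: (K u w v) | by apply: (K v w u)
           | rewrite eq_sym; first [ by apply: (K u v w) | by apply: (K w v u)
           | by apply: (K v u w) | by apply: (K w u v) | by apply: (K u w v)
           | by apply: (K v w u)] | lia ].
Qed.

Unset Implicit Arguments. Set Strict Implicit.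

Theorem theorem3p1 (T : finType) (e : rel T) :
  simple_graph e -> connected_graph e ->
  omega_SR e <= gp_number e /\
  (gp_number e = omega_SR e <-> exists S : {set T}, gp_setmax e S /\ SR_clique e S).
Proof.
move=> [Hs Hi] Hc.
have L1 : omega_SR e <= gp_number e.
  apply/bigmax_leqP => S /pboolP HS.
  apply: (leq_bigmax_cond (P := fun S => pbool (gp_set e S))).
  apply/pboolP. exact: clique_gp.
split => //; split.
- move=> Heq.
  have h0 : 0 < #|[pred S : {set T} | pbool (SR_clique e S)]|.
    apply/card_gt0P; exists set0; rewrite inE; apply/pboolP => u v; by rewrite inE.
  have [S0 HS0 Hm] := eq_bigmax_cond (fun S : {set T} => #|S|) h0.
  rewrite inE in HS0. move/pboolP: HS0 => HS0.
  exists S0; split => //; split; first exact: clique_gp.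
  by rewrite Heq -Hm.
- move=> [S [[Hg Hcard] Hcl]].
  apply/eqP; rewrite eqn_leq L1 andbT -Hcard.
  apply: (leq_bigmax_cond (P := fun S => pbool (SR_clique e S))).
  by apply/pboolP.
Qed.
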